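(* Consider a tripartite scenario with parties Alice, Bob and Charlie, each having three $\pm1$-valued observables $A_1,A_2,A_3$, $B_1,B_2,B_3$, $C_1,C_2,C_3$ respectively. Define $$\mathcal{I}_{AB}=\langle A_1B_1\rangle-\langle A_1B_2\rangle-\langle A_1B_3\rangle+\langle A_2B_1\rangle+\langle A_2B_2\rangle-\langle A_2B_3\rangle+\langle A_3B_1\rangle+\langle A_3B_2\rangle+\langle A_3B_3\rangle,$$ and let $\mathcal{I}_{AC}$ be the same expression with each $B_j$ replaced by $C_j$. Then $\mathcal{I}_{AB}\le 5$ in any local hidden variable model, the maximal no-signaling value of $\mathcal{I}_{AB}$ is $9$, and every tripartite no-signaling behaviour satisfies the tight monogamy relation $$\mathcal{I}_{AB}+\mathcal{I}_{AC}\le 10 .$$ Moreover, this monogamy relation does not arise from a chordal decomposition of the commutation graph, in the following sense. Let $G$ be the graph on the nine observables in which two observables are adjacent iff they belong to different parties, and regard the left-hand side $\mathcal{I}_{AB}+\mathcal{I}_{AC}$ as a set of $18$ signed terms $s\,\langle XY\rangle$ with $s\in\{\pm1\}$ and $\{X,Y\}$ an edge of $G$. There is no partition of these $18$ terms into groups $T_1,\dots,T_r$ such that, with $S_j$ the set of observables occurring in the terms of $T_j$, every induced subgraph $G[S_j]$ is chordal and $$\sum_{j=1}^r\ \max_{x\in\{\pm1\}^{S_j}}\ \sum_{s\langle XY\rangle\in T_j} s\,x_Xx_Y=10 .$$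
   Context: A no-signaling behaviour is a family of joint distributions of the outcomes of $(A_i,B_j,C_k)$ for all inputs $i,j,k$, such that the marginal distribution of any subset of the parties does not depend on the inputs of the remaining parties; $\langle XY\rangle$ is the expectation of the product of the outcomes. ''Tight'' means the bound $10$ is attained by some no-signaling behaviour. A graph is chordal if every cycle of length at least four has a chord, i.e. an edge joining two non-consecutive vertices of the cycle. *)

(* Defs.v *)
From HB Require Import structures.
From mathcomp Require Import all_boot all_order all_algebra.
Set Implicit Arguments. Unset Strict Implicit. Unset Printing Implicit Defensive.
Import Order.TTheory GRing.Theory Num.Theory.
Local Open Scope ring_scope.

(* Outcomes of +-1 valued observables are encoded as bools: true = +1, false = -1.
   Inputs (measurement settings) are 'I_3 : index 0,1,2 stands for A_1,A_2,A_3 etc. *)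

Definition sgnb {R : ringType} (b : bool) : R := if b then 1 else -1.

(* Sign of the term <A_(i+1) B_(j+1)> in I_AB (0-indexed i, j):
   row A1: + - - ; row A2: + + - ; row A3: + + + ; i.e. + iff j <= i. *)
Definition coefI {R : ringType} (i j : 'I_3) : R := if (j <= i)%N then 1 else -1.

Definition behav2 (R : realFieldType) := 'I_3 -> 'I_3 -> bool -> bool -> R.

Definition is_prob2 (R : realFieldType) (P : behav2 R) : Prop :=
  (forall x y a b, 0 <= P x y a b) /\
  (forall x y, \sum_(a : bool) \sum_(b : bool) P x y a b = 1).

Definition nosig2 (R : realFieldType) (P : behav2 R) : Prop :=
  is_prob2 P /\
  (forall x y y' a, \sum_(b : bool) P x y a b = \sum_(b : bool) P x y' a b) /\
  (forall x x' y b, \sum_(a : bool) P x y a b = \sum_(a : bool) P x' y a b).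

Definition lhv2 (R : realFieldType) (P : behav2 R) : Prop :=
  exists (L : finType) (p : L -> R) (PA PB : L -> 'I_3 -> bool -> R),
    (forall l, 0 <= p l) /\ \sum_(l : L) p l = 1 /\
    (forall l x a, 0 <= PA l x a) /\ (forall l x, \sum_(a : bool) PA l x a = 1) /\
    (forall l y b, 0 <= PB l y b) /\ (forall l y, \sum_(b : bool) PB l y b = 1) /\
    (forall x y a b, P x y a b = \sum_(l : L) p l * PA l x a * PB l y b).

Definition corr2 (R : realFieldType) (P : behav2 R) (x y : 'I_3) : R :=
  \sum_(a : bool) \sum_(b : bool) sgnb a * sgnb b * P x y a b.

Definition I2 (R : realFieldType) (P : behav2 R) : R :=
  \sum_(i : 'I_3) \sum_(j : 'I_3) coefI i j * corr2 P i j.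

Definition behav3 (R : realFieldType) := 'I_3 -> 'I_3 -> 'I_3 -> bool -> bool -> bool -> R.

Definition is_prob3 (R : realFieldType) (P : behav3 R) : Prop :=
  (forall x y z a b c, 0 <= P x y z a b c) /\
  (forall x y z, \sum_(a : bool) \sum_(b : bool) \sum_(c : bool) P x y z a b c = 1).

Definition nosig3 (R : realFieldType) (P : behav3 R) : Prop :=
  is_prob3 P /\
  (forall x y z z' a b, \sum_(c : bool) P x y z a b c = \sum_(c : bool) P x y z' a b c) /\
  (forall x y y' z a c, \sum_(b : bool) P x y z a b c = \sum_(b : bool) P x y' z a b c) /\
  (forall x x' y z b c, \sum_(a : bool) P x y z a b c = \sum_(a : bool) P x' y z a b c) /\
  (forall x y y' z z' a, \sum_(b : bool) \sum_(c : bool) P x y z a b c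
                       = \sum_(b : bool) \sum_(c : bool) P x y' z' a b c) /\
  (forall x x' y z z' b, \sum_(a : bool) \sum_(c : bool) P x y z a b c
                       = \sum_(a : bool) \sum_(c : bool) P x' y z' a b c) /\
  (forall x x' y y' z c, \sum_(a : bool) \sum_(b : bool) P x y z a b c
                       = \sum_(a : bool) \sum_(b : bool) P x' y' z a b c).

(* <A_x B_y> and <A_x C_z>, computed from the two-party marginals; by no-signaling
   the value does not depend on the (here fixed to index 0) input of the third party. *)
Definition corrAB3 (R : realFieldType) (P : behav3 R) (x y : 'I_3) : R :=
  \sum_(a : bool) \sum_(b : bool) \sum_(c : bool) sgnb a * sgnb b * P x y ord0 a b c.

Definition corrAC3 (R : realFieldType) (P : behav3 R) (x z : 'I_3) : R :=
  \sum_(a : bool) \sum_(b : bool) \sum_(c : bool) sgnb a * sgnb c * P x ord0 z a b c.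

Definition IAB3 (R : realFieldType) (P : behav3 R) : R :=
  \sum_(i : 'I_3) \sum_(j : 'I_3) coefI i j * corrAB3 P i j.

Definition IAC3 (R : realFieldType) (P : behav3 R) : R :=
  \sum_(i : 'I_3) \sum_(j : 'I_3) coefI i j * corrAC3 P i j.

(* observables: (party, index), party 0 = Alice, 1 = Bob, 2 = Charlie *)
Definition obs := ('I_3 * 'I_3)%type.

Definition adjG : rel obs := fun u v => u.1 != v.1.

Definition chordal_on (S : {set obs}) : Prop :=
  forall c : seq obs, uniq c -> (4 <= size c)%N -> {subset c <= S} -> cycle adjG c ->
    exists i j : nat, [/\ (i < j)%N, (j < size c)%N, j != i.+1,
                          ~~ ((i == 0%N) && (j == (size c).-1)) &
                          adjG (nth (ord0, ord0) c i) (nth (ord0, ord0) c j)].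

(* the 18 terms of I_AB + I_AC: (false, i, j) is the term coefI i j <A_i B_j>,
   (true, i, j) is the term coefI i j <A_i C_j> *)
Definition term := (bool * 'I_3 * 'I_3)%type.

Definition term_obsA (t : term) : obs := (ord0, t.1.2).
Definition term_obs2 (t : term) : obs :=
  (if t.1.1 then (inord 2 : 'I_3) else (inord 1 : 'I_3), t.2).

Definition obs_of (T : {set term}) : {set obs} :=
  \bigcup_(t in T) [set term_obsA t; term_obs2 t].

Definition group_val (T : {set term}) (x : obs -> bool) : int :=
  \sum_(t in T) coefI t.1.2 t.2 * sgnb (x (term_obsA t)) * sgnb (x (term_obs2 t)).

(* m is the maximum over +-1 assignments of the group's value.  Only observables
   in obs_of T occur, so maximizing over global assignments equals maximizing
   over assignments in {+-1}^{S_j}. *)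
Definition is_group_max (T : {set term}) (m : int) : Prop :=
  (exists x : {ffun obs -> bool}, group_val T x = m) /\
  (forall x : {ffun obs -> bool}, group_val T x <= m).

(* Main.v *)
Require Import Defs.
From HB Require Import structures.
From mathcomp Require Import all_boot all_order all_algebra.
From mathcomp Require Import ring lra zify.
Import Order.TTheory GRing.Theory Num.Theory.
Local Open Scope ring_scope.
Set Implicit Arguments. Unset Strict Implicit.

Definition o0 : 'I_3 := ord0.
Definition o1 : 'I_3 := @Ordinal 3 1 isT.
Definition o2 : 'I_3 := @Ordinal 3 2 isT.

Lemma sum_I3 (V : nmodType) (F : 'I_3 -> V) : \sum_(i < 3) F i = F o0 + F o1 + F o2.
Proof.
rewrite !big_ord_recl big_ord0 addr0 addrA.
by congr (_ + F _ + F _); apply/val_inj.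
Qed.

Lemma sgnb_cases (R : realFieldType) (b: bool) : sgnb b = 1 :> R \/ sgnb b = -1 :> R.
Proof. by case: b; [left|right]. Qed.
Lemma c00 (R : ringType) : coefI o0 o0 = 1 :> R. Proof. by []. Qed.
Lemma c01 (R : ringType) : coefI o0 o1 = -1 :> R. Proof. by []. Qed.
Lemma c02 (R : ringType) : coefI o0 o2 = -1 :> R. Proof. by []. Qed.
Lemma c10 (R : ringType) : coefI o1 o0 = 1 :> R. Proof. by []. Qed.
Lemma c11 (R : ringType) : coefI o1 o1 = 1 :> R. Proof. by []. Qed.
Lemma c12 (R : ringType) : coefI o1 o2 = -1 :> R. Proof. by []. Qed.
Lemma c20 (R : ringType) : coefI o2 o0 = 1 :> R. Proof. by []. Qed.
Lemma c21 (R : ringType) : coefI o2 o1 = 1 :> R. Proof. by []. Qed.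
Lemma c22 (R : ringType) : coefI o2 o2 = 1 :> R. Proof. by []. Qed.
Definition coefE := (c00, c01, c02, c10, c11, c12, c20, c21, c22).

Lemma mul_le_cases (R : realFieldType) (u c : R) : -1 <= u <= 1 -> u * c <= c \/ u * c <= - c.
Proof. move=> /andP[h1 h2]. case: (lerP 0 c) => hc; [left|right]; nra. Qed.

Definition bil (R : realFieldType) (u v : 'I_3 -> R) : R := \sum_i \sum_j coefI i j * u i * v j.

Lemma bil_le5 (R : realFieldType) (u v : 'I_3 -> R) :
  (forall i, -1 <= u i <= 1) -> (forall j, -1 <= v j <= 1) -> bil u v <= 5.
Proof.
move=> hu hv. rewrite /bil !sum_I3 !coefE.
have := hv o0; have := hv o1; have := hv o2 => /andP[? ?] /andP[? ?] /andP[? ?].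
have [h0|h0] := mul_le_cases (v o0 - v o1 - v o2) (hu o0);
have [h1|h1] := mul_le_cases (v o0 + v o1 - v o2) (hu o1);
have [h2|h2] := mul_le_cases (v o0 + v o1 + v o2) (hu o2); lra.
Qed.

Lemma part1 (R : realFieldType) (P : behav2 R) : lhv2 P -> I2 P <= 5.
Proof.
move=> [L [p [PA [PB [hp [hp1 [hA0 [hA1 [hB0 [hB1 HP]]]]]]]]]].
pose EA l x := PA l x true - PA l x false.
pose EB l y := PB l y true - PB l y false.
have Hc : forall x y, corr2 P x y = \sum_l p l * EA l x * EB l y.
  move=> x y; rewrite /corr2 !big_bool /= !HP !mulr_sumr -!big_split /=.
  by apply: eq_bigr => l _; rewrite /EA /EB; ring.
have -> : I2 P = \sum_l p l * bil (EA l) (EB l).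
  rewrite /I2 /bil. under [RHS]eq_bigr => l _ do rewrite !sum_I3.
  rewrite !sum_I3 !Hc !mulr_sumr -!big_split /=.
  by apply: eq_bigr => l _; ring.
have hE : forall (Q : L -> 'I_3 -> bool -> R), (forall l x a, 0 <= Q l x a) ->
   (forall l x, \sum_a Q l x a = 1) -> forall l x, -1 <= Q l x true - Q l x false <= 1.
  move=> Q h0 h1 l x; have := h1 l x; rewrite big_bool /= => e.
  have := h0 l x true; have := h0 l x false => *; apply/andP; split; lra.
apply: (le_trans (y := \sum_l p l * 5)).
  apply: ler_sum => l _; apply: ler_wpM2l => //; apply: bil_le5.
    exact: hE. exact: hE.
by rewrite -mulr_suml hp1 mul1r.
Qed.

Lemma part2 (R : realFieldType) (P : behav2 R) : nosig2 P -> I2 P <= 9.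
Proof.
move=> [[H0 H1] _].
have hb : forall x y, -1 <= corr2 P x y <= 1.
  move=> x y. have := H1 x y. rewrite /corr2 !big_bool /= => Hs.
  have:=H0 x y true true; have:=H0 x y true false; have:=H0 x y false true; have:=H0 x y false false.
  move=> *; apply/andP; split; lra.
rewrite /I2 !sum_I3 !coefE.
have := hb o0 o0; have := hb o0 o1; have := hb o0 o2;
have := hb o1 o0; have := hb o1 o1; have := hb o1 o2;
have := hb o2 o0; have := hb o2 o1; have := hb o2 o2.
move=> /andP[? ?] /andP[? ?] /andP[? ?] /andP[? ?] /andP[? ?] /andP[? ?] /andP[? ?] /andP[? ?] /andP[? ?].
lra.
Qed.

Definition PR (R : realFieldType) : behav2 R :=
  fun x y a b => if (a == b) == (y <= x)%N then 1/2 else 0.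

Lemma part3 (R : realFieldType) : exists P : behav2 R, nosig2 P /\ I2 P = 9.
Proof.
exists (@PR R). split.
  split; [split|split].
  - by move=> x y a b; rewrite /PR; case: ifP => _ //; lra.
  - by move=> x y; rewrite /PR !big_bool /=; case: (y <= x)%N => /=; lra.
  - by move=> x y y' a; rewrite /PR !big_bool /=; case: a; case: (y <= x)%N; case: (y' <= x)%N => /=; lra.
  - by move=> x x' y b; rewrite /PR !big_bool /=; case: b; case: (y <= x)%N; case: (y <= x')%N => /=; lra.
have hc : forall x y, coefI x y * corr2 (@PR R) x y = 1.
  move=> x y; rewrite /coefI /corr2 /PR !big_bool /=; case: (y <= x)%N => /=; lra.
rewrite /I2 !sum_I3 !hc; lra.
Qed.

Definition Ebc3 (R : realFieldType) (P : behav3 R) x y z : R :=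
  \sum_(a : bool) \sum_(b : bool) \sum_(c : bool) sgnb b * sgnb c * P x y z a b c.
Definition EabZ (R : realFieldType) (P : behav3 R) x y z : R :=
  \sum_(a : bool) \sum_(b : bool) \sum_(c : bool) sgnb a * sgnb b * P x y z a b c.
Definition EacY (R : realFieldType) (P : behav3 R) x y z : R :=
  \sum_(a : bool) \sum_(b : bool) \sum_(c : bool) sgnb a * sgnb c * P x y z a b c.

Lemma triple_ineq (R : realFieldType) (P : behav3 R) x y z : is_prob3 P ->
  coefI x y * EabZ P x y z + coefI x z * EacY P x y z - coefI x y * coefI x z * Ebc3 P x y z <= 1.
Proof.
move=> [H0 H1]. have := H1 x y z. rewrite /EabZ /EacY /Ebc3 !big_bool /= => Hs.
have := H0 x y z true true true; have := H0 x y z true true false;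
have := H0 x y z true false true; have := H0 x y z true false false;
have := H0 x y z false true true; have := H0 x y z false true false;
have := H0 x y z false false true; have := H0 x y z false false false.
rewrite /coefI; case: (y <= x)%N; case: (z <= x)%N => *; lra.
Qed.

Lemma tri (R : realFieldType) (P : behav3 R) x y z : nosig3 P ->
  coefI x y * corrAB3 P x y + coefI x z * corrAC3 P x z - coefI x y * coefI x z * Ebc3 P o0 y z <= 1.
Proof.
move=> NS. have := triple_ineq x y z (proj1 NS).
move: NS => [_ [HAB [HAC [HBC _]]]].
have -> : corrAB3 P x y = EabZ P x y z.
  rewrite /corrAB3 /EabZ !big_bool /=.
  have := HAB x y o0 z true true; have := HAB x y o0 z true false;
  have := HAB x y o0 z false true; have := HAB x y o0 z false false.
  rewrite !big_bool /= => *; lra.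
have -> : corrAC3 P x z = EacY P x y z.
  rewrite /corrAC3 /EacY !big_bool /=.
  have := HAC x o0 y z true true; have := HAC x o0 y z true false;
  have := HAC x o0 y z false true; have := HAC x o0 y z false false.
  rewrite !big_bool /= => *; lra.
have -> : Ebc3 P o0 y z = Ebc3 P x y z.
  rewrite /Ebc3 !big_bool /=.
  have := HBC o0 x y z true true; have := HBC o0 x y z true false;
  have := HBC o0 x y z false true; have := HBC o0 x y z false false.
  rewrite !big_bool /= => *; lra.
by [].
Qed.

Lemma single_bounds (R : realFieldType) (P : behav3 R) : nosig3 P ->
  -1 <= corrAB3 P o0 o2 <= 1 /\ -1 <= corrAC3 P o0 o2 <= 1.
Proof.
move=> [[H0 H1] _].
have := H1 o0 o2 o0; have := H1 o0 o0 o2. rewrite /corrAB3 /corrAC3 !big_bool /= => h1 h2.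
have := H0 o0 o2 o0 true true true; have := H0 o0 o2 o0 true true false;
have := H0 o0 o2 o0 true false true; have := H0 o0 o2 o0 true false false;
have := H0 o0 o2 o0 false true true; have := H0 o0 o2 o0 false true false;
have := H0 o0 o2 o0 false false true; have := H0 o0 o2 o0 false false false.
have := H0 o0 o0 o2 true true true; have := H0 o0 o0 o2 true true false;
have := H0 o0 o0 o2 true false true; have := H0 o0 o0 o2 true false false;
have := H0 o0 o0 o2 false true true; have := H0 o0 o0 o2 false true false;
have := H0 o0 o0 o2 false false true; have := H0 o0 o0 o2 false false false.
move=> *; split; apply/andP; split; lra.
Qed.

Lemma part4 (R : realFieldType) (P : behav3 R) : nosig3 P -> IAB3 P + IAC3 P <= 10.
Proof.
move=> NS.
have t001 := tri o0 o0 o1 NS; have t010 := tri o0 o1 o0 NS.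
have t101 := tri o1 o0 o1 NS; have t102 := tri o1 o0 o2 NS; have t110 := tri o1 o1 o0 NS;
have t112 := tri o1 o1 o2 NS; have t120 := tri o1 o2 o0 NS; have t121 := tri o1 o2 o1 NS.
have t201 := tri o2 o0 o1 NS; have t202 := tri o2 o0 o2 NS; have t210 := tri o2 o1 o0 NS;
have t212 := tri o2 o1 o2 NS; have t220 := tri o2 o2 o0 NS; have t221 := tri o2 o2 o1 NS.
have [/andP[s1 s2] /andP[s3 s4]] := single_bounds NS.
rewrite !coefE in t001 t010 t101 t102 t110 t112 t120 t121 t201 t202 t210 t212 t220 t221.
rewrite /IAB3 /IAC3 !sum_I3 !coefE.
lra.
Qed.

Definition Pdet (R : realFieldType) : behav3 R :=
  fun x y z a b c => if [&& a == (x != o0), b & c] then 1 else 0.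

Lemma part5 (R : realFieldType) : exists P : behav3 R, nosig3 P /\ IAB3 P + IAC3 P = 10.
Proof.
exists (@Pdet R). split.
  split; [split|].
  - by move=> x y z a b c; rewrite /Pdet; case: ifP.
  - move=> x y z; rewrite /Pdet !big_bool; case: (x != o0) => /=; lra.
  split; [by []|split; [by []|split]].
  - move=> x x' y z b c; rewrite /Pdet !big_bool; case: (x != o0); case: (x' != o0); case: b; case: c => /=; lra.
  split; [by []|split]; last first.
  move=> x x' y y' z c; rewrite /Pdet !big_bool; case: (x != o0); case: (x' != o0); case: c => /=; lra.
  move=> x x' y z z' b; rewrite /Pdet !big_bool; case: (x != o0); case: (x' != o0); case: b => /=; lra.
rewrite /IAB3 /IAC3 /corrAB3 /corrAC3 !sum_I3 !coefE !big_bool /Pdet /=.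
lra.
Qed.

Lemma in1 : (inord 1 : 'I_3) = o1. Proof. by apply/val_inj; rewrite /= inordK. Qed.
Lemma in2 : (inord 2 : 'I_3) = o2. Proof. by apply/val_inj; rewrite /= inordK. Qed.

Definition tval (t : term) (x : obs -> bool) : int :=
  coefI t.1.2 t.2 * sgnb (x (term_obsA t)) * sgnb (x (term_obs2 t)).

Lemma gvE (T : {set term}) (x : obs -> bool) : group_val T x = \sum_(t in T) tval t x. Proof. by []. Qed.

Lemma sum_ind (I : finType) (A : {pred I}) (p : pred I) :
  \sum_(t in A) ((p t : nat)%:R : int) = #|[set t in A | p t]|%:R.
Proof.
by rewrite -natr_sum -sum1dep_card big_mkcondr /=; congr (_%:R).
Qed.

Lemma val_pm t x : tval t x = 1 \/ tval t x = -1.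
Proof.
rewrite /tval /coefI; case: (_ <= _)%N; case: (x (term_obsA t)); case: (x (term_obs2 t)) => /=;
by [left|right].
Qed.

Lemma parity (T : {set term}) (x : obs -> bool) : group_val T x = #|T|%:Z - 2 * #|[set t in T | tval t x == -1]|%:Z.
Proof.
rewrite gvE (eq_bigr (fun t => 1 - 2 * ((tval t x == -1 : nat)%:R : int))); last first.
  by move=> t _; case: (val_pm t x) => ->.
rewrite sumrB -mulr_sumr sum_ind sumr_const !natz //.
Qed.

Lemma alpha_bound (T : {set term}) (m : int) (i : 'I_3) : (forall t, t \in T -> t.1.2 = i) -> is_group_max T m ->
  #|T|%:Z <= m.
Proof.
move=> hi [_ hm].
pose x : {ffun obs -> bool} := [ffun o : obs => if o.1 == o0 then true else (o.2 <= i)%N].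
have <- : group_val T x = #|T|%:Z.
  rewrite gvE (eq_bigr (fun _ => 1)); first by rewrite sumr_const natz.
  move=> [[b r] c] /[dup] Ht /hi /= ->.
  rewrite /tval /term_obsA /term_obs2 /= !ffunE /=.
  by case: b {Ht}; rewrite ?in1 ?in2 /= /coefI; case: (c <= i)%N.
exact: hm.
Qed.

Definition bigT (T : {set term}) : bool :=
  [exists j : 'I_3, 1 < #|[set r : 'I_3 | (false, r, j) \in T]|]%N.

Lemma beta_bound (T : {set term}) (m : int) :
  (forall t t', t \in T -> t' \in T -> t.1.1 = t'.1.1 -> t.2 = t'.2) -> is_group_max T m ->
  #|T|%:Z - 2 * (bigT T : nat)%:Z <= m.
Proof.
move=> hb [[x0 e0] hm].
set j := if [pick t in T | ~~ t.1.1] is Some t then t.2 else ord0.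
have hj : forall t, t \in T -> ~~ t.1.1 -> t.2 = j.
  move=> t Ht Hn; rewrite /j; case: pickP => [t0 /andP[Ht0 Hn0]|/(_ t)]; last by rewrite Ht Hn.
  apply: hb => //. by move: Hn Hn0; case: t.1.1; case: t0.1.1.
set k := if [pick t in T | t.1.1] is Some t then t.2 else ord0.
have hk : forall t, t \in T -> t.1.1 -> t.2 = k.
  move=> t Ht Hn; rewrite /k; case: pickP => [t0 /andP[Ht0 Hn0]|/(_ t)]; last by rewrite Ht Hn.
  apply: hb => //. by move: Hn Hn0; case: t.1.1; case: t0.1.1.
pose xc (c : bool) : {ffun obs -> bool} := [ffun o : obs => if o.1 == o0 then
   (if (false, o.2, j) \in T then (j <= o.2)%N else ((k <= o.2)%N == c))
   else if o.1 == o1 then true else c].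
pose pen (t : term) := t.1.1 && ((false, t.1.2, j) \in T).
have hper : forall t, t \in T -> tval t (xc true) + tval t (xc false) = if pen t then 0 else 2.
  move=> [[b r] col] Ht.
  rewrite /tval /term_obsA /term_obs2 /pen /= !ffunE /=.
  case: b Ht => Ht /=.
    have -> : col = k by exact: (hk _ Ht).
    rewrite in2 /=. case: ((false, r, j) \in T); rewrite /coefI;
    case: (k <= r)%N; case: (j <= r)%N => //=.
  have ec : col = j by exact: (hj _ Ht).
  rewrite in1 /=. rewrite -ec Ht /coefI. by case: (col <= r)%N.
have hsum : group_val T (xc true) + group_val T (xc false)
    = 2 * #|T|%:Z - 2 * #|[set t in T | pen t]|%:Z.
  rewrite !gvE -big_split /=.
  rewrite (eq_bigr (fun t => 2 - 2 * ((pen t : nat)%:R : int))); last first.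
    by move=> t Ht; rewrite hper //; case: (pen t).
  by rewrite sumrB -mulr_sumr sum_ind sumr_const -!natz !mulr_natr.
have hpenB : (#|[set t in T | pen t]| <= #|[set r : 'I_3 | (false, r, j) \in T]|)%N.
  rewrite -(card_in_imset (f := fun t : term => t.1.2)).
    apply: subset_leq_card; apply/subsetP => r /imsetP [t].
    by move=> /setIdP[Ht /andP[h1 h2]] ->; rewrite inE.
  move=> [[b r] c] [[b' r'] c']; rewrite !inE /pen /= => /andP[Ht /andP[h1 _]] /andP[Ht' /andP[h1' _]] er.
  have := hk _ Ht h1; have := hk _ Ht' h1'. move: h1 h1' er => /= -> -> /= -> -> -> //.
have hB3 : (#|[set r : 'I_3 | (false, r, j) \in T]| <= 3)%N.
  by apply: leq_trans (max_card _) _; rewrite card_ord.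
have hbig : ~~ bigT T -> (#|[set r : 'I_3 | (false, r, j) \in T]| <= 1)%N.
  by move/existsPn/(_ j); rewrite -leqNgt.
have h1 := hm (xc true); have h2 := hm (xc false).
move: e0; rewrite parity => e0.
have hnb := hbig.
move: hsum hpenB hB3 h1 h2 e0 hnb.
move: #|T| #|[set t in T | pen t]| #|[set r | (false, r, j) \in T]| #|[set t in T | tval t x0 == -1]|.
move: (group_val T (xc true)) (group_val T (xc false)) => g1 g2 a b c d.
case: (bigT T) => /=; lia.
Qed.

Lemma obs_ofA (T : {set term}) t : t \in T -> term_obsA t \in obs_of T.
Proof. by move=> Ht; apply/bigcupP; exists t => //; rewrite !inE eqxx. Qed.
Lemma obs_of2 (T : {set term}) t : t \in T -> term_obs2 t \in obs_of T.
Proof. by move=> Ht; apply/bigcupP; exists t => //; rewrite !inE eqxx orbT. Qed.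

Lemma chordal_struct (T : {set term}) : chordal_on (obs_of T) ->
  (exists i, forall t, t \in T -> t.1.2 = i) \/
  (forall t t', t \in T -> t' \in T -> t.1.1 = t'.1.1 -> t.2 = t'.2).
Proof.
move=> hc.
case: (boolP [exists t1, exists t2, [&& t1 \in T, t2 \in T & t1.1.2 != t2.1.2]]); last first.
  move/existsPn => hn; left.
  case: (pickP (fun t => t \in T)) => [t0 Ht0|hnone]; last by exists ord0 => t Ht; move: (hnone t); rewrite Ht.
  exists t0.1.2 => t Ht; move/existsPn: (hn t) => /(_ t0).
  by rewrite Ht Ht0 /= negbK => /eqP.
move=> /existsP[t1 /existsP[t2 /and3P[Ht1 Ht2 hne]]]; right.
move=> t t' Ht Ht' heq; apply/eqP; apply: contraT => hne'.
have hAX : forall u v, term_obsA u != term_obs2 v.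
  by move=> u v; rewrite /term_obsA /term_obs2 xpair_eqE; case: v.1.1; rewrite ?in1 ?in2.
have hadjAX : forall u v, adjG (term_obsA u) (term_obs2 v).
  by move=> u v; rewrite /adjG /term_obsA /term_obs2 /=; case: v.1.1; rewrite ?in1 ?in2.
have hadjXA : forall u v, adjG (term_obs2 v) (term_obsA u).
  by move=> u v; rewrite /adjG /term_obsA /term_obs2 /=; case: v.1.1; rewrite ?in1 ?in2.
have hAA : term_obsA t1 != term_obsA t2 by rewrite /term_obsA xpair_eqE /= hne.
have hXX : term_obs2 t != term_obs2 t' by rewrite /term_obs2 heq xpair_eqE negb_and hne' orbT.
have nAA : ~~ adjG (term_obsA t1) (term_obsA t2) by rewrite /adjG /term_obsA /=.
have nXX : ~~ adjG (term_obs2 t) (term_obs2 t') by rewrite /adjG /term_obs2 /= heq eqxx.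
have hsub : {subset [:: term_obsA t1; term_obs2 t; term_obsA t2; term_obs2 t'] <= obs_of T}.
  move=> o; rewrite !inE => /or4P[] /eqP ->.
  - exact: obs_ofA. - exact: obs_of2. - exact: obs_ofA. - exact: obs_of2.
have e1 := hAX t1 t; have e2 := hAX t1 t'; have e3 := hAX t2 t; have e4 := hAX t2 t'.
have d1 := hadjAX t1 t; have d2 := hadjAX t2 t; have d3 := hadjAX t2 t'; have d4 := hadjXA t1 t'.
move: hsub hAA hXX nAA nXX e1 e2 e3 e4 d1 d2 d3 d4.
move: (term_obsA t1) (term_obsA t2) (term_obs2 t) (term_obs2 t') => a1 a2 x1 x2.
move=> hsub hAA hXX nAA nXX e1 e2 e3 e4 d1 d2 d3 d4.
have huniq : uniq [:: a1; x1; a2; x2].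
  by rewrite /= !inE !negb_or hAA e1 e2 (eq_sym x1) e3 hXX e4.
have hcyc : cycle adjG [:: a1; x1; a2; x2].
  by rewrite /= d1 d4 d3 /adjG eq_sym -/(adjG _ _) d2.
have [i [j [hij hj hn1 hn0 hadj]]] := hc _ huniq isT hsub hcyc.
move: hij hj hn1 hn0 hadj.
case: i => [|[|[|[|i]]]]; case: j => [|[|[|[|j]]]] //=.
- by rewrite (negbTE nAA).
- by rewrite (negbTE nXX).
Qed.

Lemma lower (T : {set term}) (m : int) : chordal_on (obs_of T) -> is_group_max T m ->
  #|T|%:Z - 2 * (bigT T : nat)%:Z <= m.
Proof.
move=> hc hm; case: (chordal_struct hc) => [[i hi]|hb].
  have := alpha_bound hi hm. case: (bigT T) => /=; lia.
exact: beta_bound.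
Qed.

Lemma count_big (Pt : {set {set term}}) : partition Pt [set: term] ->
  (#|[set T in Pt | bigT T]| <= 3)%N.
Proof.
move=> /and3P[_ htriv _].
pose f (T : {set term}) := odflt ord0 [pick j : 'I_3 | 1 < #|[set r : 'I_3 | (false, r, j) \in T]|]%N.
rewrite -(card_in_imset (f := f)).
  by apply: leq_trans (max_card _) _; rewrite card_ord.
move=> T1 T2; rewrite !inE => /andP[h1 b1] /andP[h2 b2] ef.
apply/eqP; apply: contraT => hne.
have hdis := trivIsetP htriv T1 T2 h1 h2 hne.
move: ef; rewrite /f.
case: pickP => [j hj|]; last by move/existsP: b1 => [j hj] /(_ j); rewrite hj.
case: pickP => [j' hj'|]; last by move/existsP: b2 => [j0 hj0] /(_ j0); rewrite hj0.
move=> /= ejj; subst j'.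
set R1 := [set r : 'I_3 | (false, r, j) \in T1] in hj.
set R2 := [set r : 'I_3 | (false, r, j) \in T2] in hj'.
have hI : R1 :&: R2 = set0.
  apply/setP => r; rewrite !inE.
  case e1: ((false, r, j) \in T1) => //=.
  by rewrite (disjointFr hdis e1).
have := cardsU R1 R2; rewrite hI cards0 subn0 => hU.
have : (#|R1 :|: R2| <= 3)%N by apply: leq_trans (max_card _) _; rewrite card_ord.
rewrite hU. lia.
Qed.

Lemma part6 : ~ (exists (Pt : {set {set term}}) (m : {set term} -> int),
        partition Pt [set: term] /\
        (forall T, T \in Pt -> chordal_on (obs_of T)) /\
        (forall T, T \in Pt -> is_group_max T (m T)) /\
        \sum_(T in Pt) m T = 10).
Proof.
move=> [Pt [m [hP [hch [hmax hsum]]]]].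
have hle : \sum_(T in Pt) (#|T|%:Z - 2 * (bigT T : nat)%:Z) <= \sum_(T in Pt) m T.
  by apply: ler_sum => T hT; apply: lower; [apply: hch | apply: hmax].
rewrite sumrB -mulr_sumr in hle.
have e1 : \sum_(T in Pt) (#|T|%:Z) = 18.
  rewrite (eq_bigr (fun T : {set term} => (#|T|%:R : int))); last by move=> T _; rewrite natz.
  rewrite -natr_sum -(card_partition hP) cardsT card_prod card_prod card_bool card_ord.
  by [].
have e2 : \sum_(T in Pt) ((bigT T : nat)%:Z) = #|[set T in Pt | bigT T]|%:Z.
  rewrite (eq_bigr (fun T : {set term} => ((bigT T : nat)%:R : int))); last by move=> T _; rewrite natz.
  by rewrite sum_ind natz.
have hc := count_big hP.
rewrite e1 e2 hsum in hle.
move: hle hc; move: #|[set T in Pt | bigT T]| => n. lia.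
Qed.


Theorem proposition2 (R : realFieldType) :
  (* local bound *)
  (forall P : behav2 R, lhv2 P -> I2 P <= 5) /\
  (* maximal no-signaling value 9 *)
  (forall P : behav2 R, nosig2 P -> I2 P <= 9) /\
  (exists P : behav2 R, nosig2 P /\ I2 P = 9) /\
  (* tight monogamy relation *)
  (forall P : behav3 R, nosig3 P -> IAB3 P + IAC3 P <= 10) /\
  (exists P : behav3 R, nosig3 P /\ IAB3 P + IAC3 P = 10) /\
  (* not obtainable from a chordal decomposition *)
  ~ (exists (Pt : {set {set term}}) (m : {set term} -> int),
        partition Pt [set: term] /\
        (forall T, T \in Pt -> chordal_on (obs_of T)) /\
        (forall T, T \in Pt -> is_group_max T (m T)) /\
        \sum_(T in Pt) m T = 10).
Proof.
split; first exact: (@part1 R).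
split; first exact: (@part2 R).
split; first exact: part3.
split; first exact: (@part4 R).
split; first exact: part5.
exact: part6.
Qed.
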